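(* For every $\alpha>-1$ and every $z>0$, $$|I_\alpha(z)-I_{\alpha+1}(z)|<(4\alpha+6)\frac{I_{\alpha+1}(z)}{z}.$$
   Context: $I_\alpha(z)=\sum_{k=0}^\infty\frac{(z/2)^{\alpha+2k}}{k!\,\Gamma(\alpha+k+1)}$ is the modified Bessel function of the first kind of order $\alpha>-1$. *)

(* Defs.v *)
From Stdlib Require Import Reals Arith Factorial.
From Coquelicot Require Import Coquelicot.
Open Scope R_scope.

Definition Gamma (s : R) : R :=
  RInt_gen (fun t => Rpower t (s - 1) * exp (- t))
           (at_right 0) (Rbar_locally p_infty).

Definition BesselI (alpha z : R) : R :=
  Series (fun k : nat =>
    Rpower (z / 2) (alpha + 2 * INR k) / (INR (fact k) * Gamma (alpha + INR k + 1))).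

(* Main.v *)
Require Import Defs.
From Stdlib Require Import Reals Lra Psatz Arith Factorial.
From Coquelicot Require Import Coquelicot.
Open Scope R_scope.

Definition gf (s t : R) : R := exp ((s - 1) * ln t) * exp (- t).

Lemma Gamma_gf s : Gamma s = RInt_gen (gf s) (at_right 0) (Rbar_locally p_infty).
Proof. reflexivity. Qed.

Lemma gf_pos s t : 0 < gf s t.
Proof. unfold gf. apply Rmult_lt_0_compat; apply exp_pos. Qed.

Ltac dcont := apply (ex_derive_continuous (V:=R_NormedModule)).

Lemma gf_cont s t : 0 < t -> continuous (gf s) t.
Proof. intros Ht. dcont. unfold gf. auto_derive. lra. Qed.

Lemma ex_RInt_gf s a b : 0 < a -> 0 < b -> ex_RInt (gf s) a b.
Proof.
  intros Ha Hb. apply (ex_RInt_continuous (V:=R_CompleteNormedModule)). intros z Hz. apply gf_cont.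
  assert (0 < Rmin a b) by (apply Rmin_glb_lt; lra). lra.
Qed.

Lemma RInt_const_R (a b c : R) : RInt (fun _ => c) a b = (b - a) * c.
Proof. rewrite RInt_const. reflexivity. Qed.

Lemma RInt_gf_nonneg s a b : 0 < a -> a <= b -> 0 <= RInt (gf s) a b.
Proof.
  intros Ha Hab.
  assert (RInt (fun _ => 0) a b <= RInt (gf s) a b).
  { apply RInt_le; auto. apply ex_RInt_const. apply ex_RInt_gf; lra.
    intros x _. left; apply gf_pos. }
  rewrite RInt_const_R in H. lra.
Qed.

Lemma ballR (y e x : R) : ball y e x <-> Rabs (x - y) < e.
Proof. reflexivity. Qed.

Lemma exp_sln_m1 s t : 0 < t -> exp ((s-1) * ln t) = exp (s * ln t) / t.
Proof.
  intros Ht. replace ((s-1)*ln t) with (s * ln t + - ln t) by ring.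
  rewrite exp_plus, exp_Ropp, exp_ln; auto.
Qed.

Lemma exp_neg_le1 x : 0 <= x -> exp (- x) <= 1.
Proof. intros. rewrite <- exp_0. destruct (Req_dec x 0). subst. rewrite Ropp_0; lra.
  left; apply exp_increasing; lra. Qed.

Lemma RInt_gf_tail0 s u v : 0 < s -> 0 < u -> u <= v ->
  RInt (gf s) u v <= exp (s * ln v) / s.
Proof.
  intros Hs Hu Huv.
  assert (Hint : is_RInt (fun t => exp ((s-1) * ln t)) u v
     (minus (exp (s * ln v) / s) (exp (s * ln u) / s))).
  { apply (is_RInt_derive (fun t => exp (s * ln t) / s)).
    - intros x Hx. rewrite Rmin_left in Hx by lra. rewrite Rmax_right in Hx by lra.
      auto_derive. lra. rewrite exp_sln_m1 by lra. field. lra.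
    - intros x Hx. rewrite Rmin_left in Hx by lra. rewrite Rmax_right in Hx by lra.
      dcont. auto_derive. lra. }
  apply (is_RInt_unique (V:=R_CompleteNormedModule)) in Hint.
  assert (RInt (gf s) u v <= RInt (fun t => exp ((s-1) * ln t)) u v).
  { apply RInt_le; auto. apply ex_RInt_gf; lra.
    apply (ex_RInt_continuous (V:=R_CompleteNormedModule)). intros x Hx. rewrite Rmin_left in Hx by lra.
    dcont. auto_derive. lra.
    intros x Hx. unfold gf. rewrite <- (Rmult_1_r (exp ((s-1) * ln x))) at 2.
    apply Rmult_le_compat_l. left; apply exp_pos. apply exp_neg_le1. lra. }
  rewrite Hint in H. unfold minus, plus, opp in H; simpl in H.
  assert (0 < exp (s * ln u) / s) by (apply Rdiv_lt_0_compat; [apply exp_pos|lra]).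
  lra.
Qed.

Definition Cs (s : R) : R := exp (Rabs (s - 1) * ln (2 * Rabs (s - 1) + 2)).

Lemma ln_le_m1 u : 0 < u -> ln u <= u - 1.
Proof. intros. pose proof (exp_ineq1_le (ln u)). rewrite exp_ln in H0; lra. Qed.

Lemma exp_mono a b : a <= b -> exp a <= exp b.
Proof. intros [H|H]. left; apply exp_increasing; auto. subst; lra. Qed.

Lemma ln_ge0 t : 1 <= t -> 0 <= ln t.
Proof. intros. rewrite <- ln_1. apply ln_le; lra. Qed.

Lemma gf_bound_inf s t : 1 <= t -> gf s t <= Cs s * exp (- t / 2).
Proof.
  intros Ht. unfold gf, Cs. rewrite <- exp_plus, <- exp_plus.
  apply exp_mono.
  set (A := Rabs (s - 1)). set (K := 2 * A + 2).
  assert (HA : 0 <= A) by apply Rabs_pos.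
  assert (HK : 0 < K) by (unfold K; lra).
  assert (Hl : ln t = ln K + ln (t / K)).
  { rewrite <- ln_mult; try apply Rdiv_lt_0_compat; try lra. f_equal. field. lra. }
  assert (H1 : ln (t / K) <= t / K - 1) by (apply ln_le_m1; apply Rdiv_lt_0_compat; lra).
  assert (HL : 0 <= ln t) by (apply ln_ge0; lra).
  assert (H2 : (s - 1) * ln t <= A * ln t).
  { apply Rmult_le_compat_r; auto. apply Rle_abs. }
  assert (H3 : A * (t / K) <= t / 2).
  { unfold Rdiv. assert (Hw : K * / K = 1) by (field; lra).
    assert (0 < / K) by (apply Rinv_0_lt_compat; lra).
    assert (HAw : A * / K = 1/2 - / K) by (unfold K; field; lra).
    replace (A * (t * / K)) with (t * (A * / K)) by ring. rewrite HAw. nra. }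
  nra.
Qed.

Lemma RInt_gf_taili s u v : 1 <= u -> u <= v ->
  RInt (gf s) u v <= 2 * Cs s * exp (- u / 2).
Proof.
  intros Hu Huv.
  assert (HC : 0 < Cs s) by apply exp_pos.
  assert (Hint : is_RInt (fun t => Cs s * exp (- t / 2)) u v
     (minus (- 2 * Cs s * exp (- v / 2)) (- 2 * Cs s * exp (- u / 2)))).
  { apply (is_RInt_derive (fun t => - 2 * Cs s * exp (- t / 2))).
    - intros x Hx. auto_derive. auto. unfold Rdiv. field.
    - intros x Hx. dcont. auto_derive. auto. }
  apply (is_RInt_unique (V:=R_CompleteNormedModule)) in Hint.
  assert (RInt (gf s) u v <= RInt (fun t => Cs s * exp (- t / 2)) u v).
  { apply RInt_le; auto. apply ex_RInt_gf; lra.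
    apply (ex_RInt_continuous (V:=R_CompleteNormedModule)). intros x Hx.
    dcont. auto_derive. auto.
    intros x Hx. apply gf_bound_inf. lra. }
  rewrite Hint in H. unfold minus, plus, opp in H; simpl in H.
  assert (0 < Cs s * exp (- v / 2)) by (apply Rmult_lt_0_compat; [auto|apply exp_pos]).
  lra.
Qed.

Lemma eps0 s e : 0 < s -> 0 < e ->
  exists d, 0 < d <= 1 /\ forall a, 0 < a <= d -> exp (s * ln a) / s < e.
Proof.
  intros Hs He.
  set (d := Rmin 1 (exp ((ln (s * e) - 1) / s))).
  assert (Hd : 0 < d) by (apply Rmin_glb_lt; [lra | apply exp_pos]).
  exists d. split. split; auto. apply Rmin_l.
  intros a Ha.
  assert (H1 : ln a <= (ln (s * e) - 1) / s).
  { rewrite <- (ln_exp ((ln (s * e) - 1) / s)). apply ln_le. lra.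
    apply Rle_trans with d. lra. apply Rmin_r. }
  assert (H2 : s * ln a <= ln (s * e) - 1).
  { apply Rmult_le_compat_l with (r := s) in H1; [|lra].
    replace (s * ((ln (s * e) - 1) / s)) with (ln (s * e) - 1) in H1 by (field; lra). auto. }
  apply exp_mono in H2. unfold Rminus in H2. rewrite exp_plus, exp_ln in H2 by (apply Rmult_lt_0_compat; lra).
  assert (exp (- (1)) < 1) by (apply Rlt_le_trans with (exp 0); [apply exp_increasing; lra | rewrite exp_0; lra]).
  apply Rmult_lt_reg_l with s. auto. unfold Rdiv. rewrite <- Rmult_assoc, (Rmult_comm s), Rmult_assoc, Rinv_r by lra.
  assert (0 < s * e) by nra. rewrite Rmult_1_r. nra.
Qed.

Lemma epsinf C e : 0 < C -> 0 < e ->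
  exists M, 1 <= M /\ forall b, M <= b -> 2 * C * exp (- b / 2) < e.
Proof.
  intros HC He.
  set (M := Rmax 1 (2 * (ln (2 * C / e) + 1))).
  exists M. split. apply Rmax_l. intros b Hb.
  assert (H1 : - b / 2 <= - ln (2 * C / e) + - 1).
  { assert (2 * (ln (2 * C / e) + 1) <= b) by (apply Rle_trans with M; [apply Rmax_r|auto]). lra. }
  apply exp_mono in H1. rewrite exp_plus, exp_Ropp, exp_ln in H1 by (apply Rdiv_lt_0_compat; lra).
  assert (exp (- (1)) < 1) by (apply Rlt_le_trans with (exp 0); [apply exp_increasing; lra | rewrite exp_0; lra]).
  assert (Hi : / (2 * C / e) = e / (2 * C)) by (field; lra).
  rewrite Hi in H1.
  assert (0 < e / (2 * C)) by (apply Rdiv_lt_0_compat; lra).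
  assert (exp (- b / 2) < e / (2 * C)).
  { apply Rle_lt_trans with (e / (2 * C) * exp (- (1))); auto. nra. }
  apply Rmult_lt_compat_l with (r := 2 * C) in H2; [|lra].
  replace (2 * C * (e / (2 * C))) with e in H2 by (field; lra). auto.
Qed.

Lemma chasles_gf s a b c : 0 < a -> 0 < b -> 0 < c ->
  RInt (gf s) a b + RInt (gf s) b c = RInt (gf s) a c.
Proof.
  intros. apply (RInt_Chasles (V:=R_CompleteNormedModule)); apply ex_RInt_gf; auto.
Qed.

Lemma RInt_gf_swap s a b : 0 < a -> 0 < b -> RInt (gf s) b a = - RInt (gf s) a b.
Proof.
  intros. pose proof (chasles_gf s a b a H H0 H). rewrite RInt_point in H1.
  change (@zero R_CompleteNormedModule) with 0 in H1. lra.
Qed.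

Lemma abs_tail0 s e a a' : 0 < s -> 0 < e ->
  forall d, (forall x, 0 < x <= d -> exp (s * ln x) / s < e) ->
  0 < a <= d -> 0 < a' <= d -> Rabs (RInt (gf s) a a') < e.
Proof.
  intros Hs He d Hd Ha Ha'.
  destruct (Rle_lt_dec a a') as [H|H].
  - pose proof (RInt_gf_nonneg s a a' (proj1 Ha) H).
    pose proof (RInt_gf_tail0 s a a' Hs (proj1 Ha) H).
    pose proof (Hd a' Ha'). rewrite Rabs_right by lra. lra.
  - rewrite RInt_gf_swap by lra.
    pose proof (RInt_gf_nonneg s a' a (proj1 Ha') (Rlt_le _ _ H)).
    pose proof (RInt_gf_tail0 s a' a Hs (proj1 Ha') (Rlt_le _ _ H)).
    pose proof (Hd a Ha). rewrite Rabs_left1 by lra. lra.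
Qed.

Lemma abs_taili s e b b' M : 1 <= M ->
  (forall x, M <= x -> 2 * Cs s * exp (- x / 2) < e) ->
  M <= b -> M <= b' -> Rabs (RInt (gf s) b b') < e.
Proof.
  intros HM Hd Hb Hb'.
  destruct (Rle_lt_dec b b') as [H|H].
  - pose proof (RInt_gf_nonneg s b b' ltac:(lra) H).
    pose proof (RInt_gf_taili s b b' ltac:(lra) H).
    pose proof (Hd b Hb). rewrite Rabs_right by lra. lra.
  - rewrite RInt_gf_swap by lra.
    pose proof (RInt_gf_nonneg s b' b ltac:(lra) (Rlt_le _ _ H)).
    pose proof (RInt_gf_taili s b' b ltac:(lra) (Rlt_le _ _ H)).
    pose proof (Hd b' Hb'). rewrite Rabs_left1 by lra. lra.
Qed.

Notation FF := (filter_prod (at_right 0) (Rbar_locally p_infty)).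
Definition RI (s : R) (ab : R * R) : R := RInt (gf s) (fst ab) (snd ab).

Lemma FF_proper : ProperFilter FF.
Proof. apply filter_prod_proper. Qed.

Lemma FF_box d M : 0 < d -> FF (fun ab => 0 < fst ab <= d /\ M <= snd ab).
Proof.
  intros Hd. apply (Filter_prod _ _ _ (fun a => 0 < a <= d) (fun b => M <= b)).
  - exists (mkposreal d Hd). intros y Hy Hy0. assert (Hy1 : Rabs (y - 0) < d) by exact Hy.
    rewrite Rminus_0_r, Rabs_right in Hy1 by lra. lra.
  - exists M. intros; lra.
  - intros x y Hx Hy. simpl. auto.
Qed.

Lemma Gamma_limit_ex s : 0 < s -> exists l, filterlim (RI s) FF (locally l).
Proof.
  intros Hs.
  apply (filterlim_locally_cauchy (U:=R_CompleteSpace) (F:=FF) (RI s)).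
  intros eps.
  assert (He : 0 < eps / 2) by (destruct eps; simpl; lra).
  destruct (eps0 s (eps/2) Hs He) as [d [Hd1 Hd2]].
  destruct (epsinf (Cs s) (eps/2) (exp_pos _) He) as [M [HM1 HM2]].
  exists (fun ab => 0 < fst ab <= d /\ M <= snd ab). split. apply FF_box; lra.
  intros [a b] [a' b'] [Ha Hb] [Ha' Hb']. simpl in *.
  apply ballR. unfold RI; simpl.
  rewrite <- (chasles_gf s a' a b') by lra.
  rewrite <- (chasles_gf s a b b') by lra.
  pose proof (abs_tail0 s (eps/2) a' a Hs He d Hd2 Ha' Ha).
  pose proof (abs_taili s (eps/2) b b' M HM1 HM2 Hb Hb').
  replace (RInt (gf s) a' a + (RInt (gf s) a b + RInt (gf s) b b') - RInt (gf s) a b)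
    with (RInt (gf s) a' a + RInt (gf s) b b') by ring.
  eapply Rle_lt_trans. apply Rabs_triang. destruct eps; simpl in *; lra.
Qed.

Lemma Gamma_lim s : 0 < s -> filterlim (RI s) FF (locally (Gamma s)).
Proof.
  intros Hs. destruct (Gamma_limit_ex s Hs) as [l Hl].
  assert (Hg : is_RInt_gen (gf s) (at_right 0) (Rbar_locally p_infty) l).
  { intros P HP. specialize (Hl P HP). unfold filtermap in Hl.
    assert (Hpos : FF (fun ab => 0 < fst ab <= 1 /\ 1 <= snd ab)) by (apply FF_box; lra).
    generalize (filter_and _ _ Hl Hpos). unfold filtermapi. apply filter_imp.
    intros [a b] [H1 [H2 H3]]. simpl in *. exists (RI s (a, b)). split; auto.
    apply (RInt_correct (V:=R_CompleteNormedModule)). apply ex_RInt_gf; simpl; lra. }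
  rewrite Gamma_gf. erewrite is_RInt_gen_unique; eauto.
Qed.

Lemma lim_ge (f : R * R -> R) l c :
  filterlim f FF (locally l) -> FF (fun x => c <= f x) -> c <= l.
Proof.
  intros Hl Hc. destruct (Rle_lt_dec c l) as [H|H]; auto. exfalso.
  pose proof (proj1 (filterlim_locally (F:=FF) (U:=R_UniformSpace) f l) Hl) as Hl2. clear Hl. rename Hl2 into Hl. specialize (Hl (mkposreal (c - l) ltac:(lra))).
  destruct (filter_ex (F:=FF) _ (filter_and _ _ Hl Hc)) as [x [Hx1 Hx2]].
  assert (Hx3 : Rabs (f x - l) < c - l) by exact Hx1. apply Rabs_def2 in Hx3. lra.
Qed.

Lemma RInt_gf_12_pos s : 0 < RInt (gf s) 1 2.
Proof.
  set (m := exp (- Rabs (s - 1) * ln 2) * exp (- 2)).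
  assert (Hm : 0 < m) by (apply Rmult_lt_0_compat; apply exp_pos).
  assert (RInt (fun _ => m) 1 2 <= RInt (gf s) 1 2).
  { apply RInt_le. lra. apply ex_RInt_const. apply ex_RInt_gf; lra.
    intros x Hx. unfold m, gf. apply Rmult_le_compat; try (left; apply exp_pos).
    - apply exp_mono. assert (0 <= ln x) by (apply ln_ge0; lra).
      assert (ln x <= ln 2) by (apply ln_le; lra).
      pose proof (Rle_abs (s - 1)). pose proof (Rle_abs (- (s - 1))). rewrite Rabs_Ropp in H2. nra.
    - apply exp_mono. lra. }
  rewrite RInt_const_R in H. lra.
Qed.

Lemma Gamma_pos s : 0 < s -> 0 < Gamma s.
Proof.
  intros Hs. apply Rlt_le_trans with (RInt (gf s) 1 2). apply RInt_gf_12_pos.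
  apply (lim_ge (RI s)). apply Gamma_lim; auto.
  generalize (FF_box 1 2 ltac:(lra)). apply filter_imp. intros [a b] [Ha Hb]. simpl in *.
  unfold RI; simpl.
  rewrite <- (chasles_gf s a 1 b) by lra. rewrite <- (chasles_gf s 1 2 b) by lra.
  pose proof (RInt_gf_nonneg s a 1 ltac:(lra) ltac:(lra)).
  pose proof (RInt_gf_nonneg s 2 b ltac:(lra) ltac:(lra)). lra.
Qed.

Lemma RI_rec s a b : 0 < s -> 0 < a -> 0 < b ->
  RInt (gf (s + 1)) a b = (- gf (s + 1) b) - (- gf (s + 1) a) + s * RInt (gf s) a b.
Proof.
  intros Hs Ha Hb.
  assert (Hpos : forall x, Rmin a b <= x <= Rmax a b -> 0 < x).
  { intros x Hx. assert (0 < Rmin a b) by (apply Rmin_glb_lt; lra). lra. }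
  assert (H1 : is_RInt (fun t => gf (s + 1) t - s * gf s t) a b
                (minus (- gf (s + 1) b) (- gf (s + 1) a))).
  { apply (is_RInt_derive (fun t => - gf (s + 1) t)).
    - intros x Hx. specialize (Hpos x Hx). unfold gf. auto_derive. lra.
      replace (s + 1 - 1) with s by ring. rewrite (exp_sln_m1 s x) by lra. field. lra.
    - intros x Hx. specialize (Hpos x Hx). dcont. unfold gf. auto_derive. lra. }
  assert (H2 : is_RInt (fun t => scal s (gf s t)) a b (scal s (RInt (gf s) a b))).
  { apply (is_RInt_scal (V:=R_NormedModule)). apply (RInt_correct (V:=R_CompleteNormedModule)). apply ex_RInt_gf; auto. }
  pose proof (is_RInt_plus (V:=R_NormedModule) _ _ _ _ _ _ H1 H2) as H3.
  apply (is_RInt_ext (V:=R_NormedModule) _ (gf (s + 1))) in H3.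
  - apply (is_RInt_unique (V:=R_CompleteNormedModule)) in H3. rewrite H3.
    unfold minus, scal; unfold plus, opp, mult; simpl. reflexivity.
  - intros x _. change (gf (s + 1) x - s * gf s x + s * gf s x = gf (s + 1) x). ring.
Qed.

Lemma Gamma_rec s : 0 < s -> Gamma (s + 1) = s * Gamma s.
Proof.
  intros Hs.
  apply (filterlim_locally_unique (F:=FF) (RI (s + 1))).
  apply Gamma_lim; lra.
  apply filterlim_locally. intros eps.
  assert (He : 0 < eps / 3) by (destruct eps; simpl; lra).
  assert (He' : 0 < eps / 3 / s) by (apply Rdiv_lt_0_compat; lra).
  destruct (eps0 s (eps / 3 / s) Hs He') as [d [Hd1 Hd2]].
  destruct (epsinf (Cs (s + 1)) (eps / 3) (exp_pos _) He) as [M [HM1 HM2]].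
  pose proof (proj1 (filterlim_locally (F:=FF) (U:=R_UniformSpace) (RI s) (Gamma s)) (Gamma_lim s Hs)) as HG.
  specialize (HG (mkposreal _ He')).
  generalize (filter_and _ _ HG (FF_box d M ltac:(lra))). apply filter_imp.
  intros [a b] [H1 [Ha Hb]]. simpl in *. apply ballR in H1. apply ballR.
  unfold RI in *; simpl in *.
  rewrite RI_rec by lra.
  assert (HGa : Rabs (gf (s + 1) a) < eps / 3).
  { specialize (Hd2 a Ha). unfold gf. replace (s + 1 - 1) with s by ring.
    rewrite Rabs_right by (left; apply Rmult_lt_0_compat; apply exp_pos).
    assert (exp (- a) <= 1) by (apply exp_neg_le1; lra).
    assert (exp (s * ln a) < eps / 3).
    { apply Rmult_lt_compat_l with (r := s) in Hd2; [|lra].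
      replace (s * (exp (s * ln a) / s)) with (exp (s * ln a)) in Hd2 by (field; lra).
      replace (s * (eps / 3 / s)) with (eps / 3) in Hd2 by (field; lra). auto. }
    pose proof (exp_pos (s * ln a)). pose proof (exp_pos (- a)). nra. }
  assert (HGb : Rabs (gf (s + 1) b) < eps / 3).
  { pose proof (gf_bound_inf (s + 1) b ltac:(lra)). pose proof (HM2 b Hb).
    pose proof (gf_pos (s + 1) b). pose proof (exp_pos (- b / 2)).
    assert (0 < Cs (s + 1)) by apply exp_pos.
    rewrite Rabs_right by lra. nra. }
  assert (Hm : Rabs (s * RInt (gf s) a b - s * Gamma s) < eps / 3).
  { rewrite <- Rmult_minus_distr_l, Rabs_mult, Rabs_right by lra.
    apply Rmult_lt_compat_l with (r := s) in H1; [|lra].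
    replace (s * (eps / 3 / s)) with (eps / 3) in H1 by (field; lra). auto. }
  apply Rabs_def2 in HGa. apply Rabs_def2 in HGb. apply Rabs_def2 in Hm.
  apply Rabs_def1; destruct eps; simpl in *; lra.
Qed.

Definition ac (mu : R) (k : nat) : R := 1 / (INR (fact k) * Gamma (mu + INR k + 1)).

Lemma Gam_pos' mu k : -1 < mu -> 0 < Gamma (mu + INR k + 1).
Proof. intros. apply Gamma_pos. pose proof (pos_INR k). lra. Qed.

Lemma ac_pos mu k : -1 < mu -> 0 < ac mu k.
Proof.
  intros H. unfold ac. apply Rdiv_lt_0_compat. lra. apply Rmult_lt_0_compat.
  apply lt_0_INR, lt_O_fact. apply Gam_pos'; auto.
Qed.

Lemma Gamma_rec' x y : 0 < x -> y = x + 1 -> Gamma y = x * Gamma x.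
Proof. intros H ->. apply Gamma_rec; auto. Qed.

Lemma ac_S mu k : -1 < mu ->
  ac mu (S k) = ac mu k / ((INR k + 1) * (mu + INR k + 1)).
Proof.
  intros H. pose proof (pos_INR k).
  unfold ac. rewrite fact_simpl, mult_INR.
  rewrite (Gamma_rec' (mu + INR k + 1)) by (try rewrite S_INR; try ring; lra).
  pose proof (Gam_pos' mu k H). pose proof (INR_fact_neq_0 k).
  rewrite S_INR. field. repeat split; lra.
Qed.

Lemma ac_shift mu k : -1 < mu -> ac (mu + 1) k = ac mu k / (mu + INR k + 1).
Proof.
  intros H. pose proof (pos_INR k).
  unfold ac.
  rewrite (Gamma_rec' (mu + INR k + 1)) by (try ring; lra).
  pose proof (Gam_pos' mu k H). pose proof (INR_fact_neq_0 k).
  field. repeat split; lra.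
Qed.

Definition St (mu y : R) (k : nat) : R := ac mu k * y ^ k.
Definition Sb (mu y : R) : R := Series (St mu y).

Lemma ex_St mu y : -1 < mu -> 0 < y -> ex_series (St mu y).
Proof.
  intros Hmu Hy. apply ex_series_Rabs.
  apply (ex_series_DAlembert _ 0). lra.
  { intros n. unfold St. apply Rgt_not_eq. apply Rmult_lt_0_compat. apply ac_pos; auto. apply pow_lt; auto. }
  apply (is_lim_seq_le_le (fun _ => 0) _ (fun n => (y / (mu + 1)) * / INR (S n))).
  - intros n. unfold St. rewrite ac_S by auto. pose proof (pos_INR n).
    pose proof (ac_pos mu n Hmu). pose proof (pow_lt y n Hy).
    replace (ac mu n / ((INR n + 1) * (mu + INR n + 1)) * y ^ S n / (ac mu n * y ^ n))
      with (y / ((INR n + 1) * (mu + INR n + 1))).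
    2:{ simpl. field. repeat split; lra. }
    rewrite Rabs_right. split.
    + left; apply Rdiv_lt_0_compat; auto. apply Rmult_lt_0_compat; lra.
    + rewrite S_INR. unfold Rdiv. rewrite Rinv_mult.
      replace (y * / (mu + 1) * / (INR n + 1)) with (y * / (INR n + 1) * / (mu + 1)) by ring.
      rewrite <- Rmult_assoc. apply Rmult_le_compat_l.
      apply Rmult_le_pos; [lra| left; apply Rinv_0_lt_compat; lra].
      apply Rinv_le_contravar; lra.
    + left; apply Rdiv_lt_0_compat; auto. apply Rmult_lt_0_compat; lra.
  - apply is_lim_seq_const.
  - replace (Finite 0) with (Rbar_mult (y / (mu + 1)) 0) by (simpl; f_equal; ring).
    apply is_lim_seq_scal_l.
    replace (Finite 0) with (Rbar_inv p_infty) by reflexivity.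
    apply is_lim_seq_inv. apply (is_lim_seq_incr_1 INR). apply is_lim_seq_INR. discriminate.
Qed.

Lemma S_pos mu y : -1 < mu -> 0 < y -> 0 < Sb mu y.
Proof.
  intros Hmu Hy. unfold Sb. rewrite Series_incr_1 by (apply ex_St; auto).
  assert (0 <= Series (fun k => St mu y (S k))).
  { apply Rle_trans with (Series (fun _ => 0 * 1)). rewrite Series_scal_l; lra.
    apply Series_le. intros n. split. lra. unfold St. rewrite Rmult_0_l. left; apply Rmult_lt_0_compat.
    apply ac_pos; auto. apply pow_lt; auto.
    apply (proj1 (ex_series_incr_1 (St mu y))). apply ex_St; auto. }
  unfold St at 1. simpl. pose proof (ac_pos mu 0 Hmu). lra.
Qed.

Lemma Rpower_2 x : 0 < x -> Rpower x 2 = x ^ 2.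
Proof. intros. replace 2 with (INR 2) by (simpl; ring). apply Rpower_pow; auto. Qed.

Lemma Bessel_Sb mu z : -1 < mu -> 0 < z ->
  BesselI mu z = Rpower (z / 2) mu * Sb mu ((z / 2) ^ 2).
Proof.
  intros Hmu Hz. unfold BesselI, Sb. rewrite <- Series_scal_l. apply Series_ext. intros k.
  unfold St, ac. rewrite Rpower_plus.
  replace (2 * INR k) with (INR (2 * k)) by (rewrite mult_INR; simpl; ring).
  rewrite Rpower_pow by lra. rewrite pow_mult.
  pose proof (INR_fact_neq_0 k). pose proof (Gam_pos' mu k Hmu).
  field. split; lra.
Qed.

Lemma ac_rec_coef b k : -1 < b ->
  ac b (S k) = (b + 1) * ac (b + 1) (S k) + ac (b + 2) k.
Proof.
  intros Hb. pose proof (pos_INR k).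
  replace (b + 2) with ((b + 1) + 1) by ring.
  rewrite (ac_shift (b + 1)) by lra. rewrite !ac_shift by lra. rewrite !ac_S by lra.
  rewrite S_INR. pose proof (ac_pos b k Hb).
  field. repeat split; lra.
Qed.

Lemma ac_rec_0 b : -1 < b -> ac b 0 = (b + 1) * ac (b + 1) 0.
Proof.
  intros Hb. rewrite ac_shift by lra. simpl. field. lra.
Qed.

Lemma Sb_rec b y : -1 < b -> 0 < y -> Sb b y = (b + 1) * Sb (b + 1) y + y * Sb (b + 2) y.
Proof.
  intros Hb Hy. unfold Sb.
  rewrite (Series_incr_1 (St b y)) by (apply ex_St; auto).
  rewrite (Series_incr_1 (St (b + 1) y)) by (apply ex_St; auto; lra).
  rewrite (Series_ext (fun k => St b y (S k))
             (fun k => (b + 1) * St (b + 1) y (S k) + y * St (b + 2) y k)).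
  2:{ intros k. unfold St. rewrite ac_rec_coef by auto. simpl. ring. }
  rewrite Series_plus.
  2:{ apply (ex_series_scal_l (V:=R_NormedModule)). apply (proj1 (ex_series_incr_1 (St (b + 1) y))). apply ex_St; auto; lra. }
  2:{ apply (ex_series_scal_l (V:=R_NormedModule)). apply ex_St; auto; lra. }
  rewrite !Series_scal_l. unfold St. rewrite ac_rec_0 by auto. simpl. ring.
Qed.

Lemma Bessel_rec b z : -1 < b -> 0 < z ->
  BesselI b z = BesselI (b + 2) z + (b + 1) / (z / 2) * BesselI (b + 1) z.
Proof.
  intros Hb Hz. rewrite !Bessel_Sb by lra.
  rewrite (Sb_rec b) by (try apply pow_lt; lra).
  rewrite !Rpower_plus, Rpower_1, Rpower_2 by lra.
  field. lra.
Qed.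

Lemma coef_term nu k l : 0 < nu ->
  ac (nu + 1) k * ac (nu + 1) l <= (ac nu (S k) * ac nu l + ac nu k * ac nu (S l)) * / 2.
Proof.
  intros Hnu. rewrite !ac_shift by lra. rewrite !ac_S by lra.
  pose proof (pos_INR k). pose proof (pos_INR l).
  pose proof (ac_pos nu k ltac:(lra)). pose proof (ac_pos nu l ltac:(lra)).
  set (p := ac nu k). set (q := ac nu l). set (K := INR k + 1). set (L := INR l + 1).
  assert (HK : 1 <= K) by (unfold K; lra). assert (HL : 1 <= L) by (unfold L; lra).
  replace (nu + INR k + 1) with (nu + K) by (unfold K; ring).
  replace (nu + INR l + 1) with (nu + L) by (unfold L; ring).
  apply Rminus_le.
  replace (p / (nu + K) * (q / (nu + L)) - (p / (K * (nu + K)) * q + p * (q / (L * (nu + L)))) * / 2)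
    with (- (p * q * ((K - L) ^ 2 + nu * (K + L)) / (2 * K * L * (nu + K) * (nu + L))))
    by (field; repeat split; lra).
  assert (0 <= p * q * ((K - L) ^ 2 + nu * (K + L)) / (2 * K * L * (nu + K) * (nu + L))).
  { assert (0 < p) by (apply ac_pos; lra). assert (0 < q) by (apply ac_pos; lra).
    unfold Rdiv. apply Rmult_le_pos. apply Rmult_le_pos. apply Rmult_le_pos; lra.
    assert (0 <= (K - L) ^ 2) by (apply pow2_ge_0). nra.
    left. apply Rinv_0_lt_compat. repeat apply Rmult_lt_0_compat; lra. }
  lra.
Qed.

Lemma coef_ineq nu n : 0 < nu ->
  sum_f_R0 (fun k => ac (nu + 1) k * ac (nu + 1) (n - k)) n <=
  sum_f_R0 (fun k => ac nu k * ac nu (S n - k)) (S n).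
Proof.
  intros Hnu.
  set (h := fun k => ac nu k * ac nu (S n - k)).
  assert (Hh : forall k, 0 < h k) by (intros; unfold h; apply Rmult_lt_0_compat; apply ac_pos; lra).
  apply Rle_trans with
    (sum_f_R0 (fun k => (h (S k) + h k) * / 2) n).
  { apply sum_Rle. intros k Hk. unfold h.
    replace (S n - S k)%nat with (n - k)%nat by lia.
    replace (S n - k)%nat with (S (n - k)) by lia.
    apply coef_term; auto. }
  rewrite <- scal_sum, plus_sum.
  assert (E1 : sum_f_R0 h (S n) = h 0%nat + sum_f_R0 (fun i => h (S i)) n).
  { rewrite decomp_sum by lia. reflexivity. }
  assert (E2 : sum_f_R0 h (S n) = sum_f_R0 h n + h (S n)) by reflexivity.
  fold h. pose proof (Hh 0%nat). pose proof (Hh (S n)). lra.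
Qed.

Lemma sum_pow (c1 c2 : nat -> R) y m :
  sum_f_R0 (fun k => (c1 k * y ^ k) * (c2 (m - k)%nat * y ^ (m - k))) m =
  y ^ m * sum_f_R0 (fun k => c1 k * c2 (m - k)%nat) m.
Proof.
  rewrite scal_sum. apply sum_eq. intros i Hi.
  replace (y ^ m) with (y ^ i * y ^ (m - i)) by (rewrite <- pow_add; f_equal; lia).
  ring.
Qed.

Lemma Sb_mono nu x : 0 < nu -> 0 < x -> x * Sb (nu + 1) (x ^ 2) < Sb nu (x ^ 2).
Proof.
  intros Hnu Hx. set (y := x ^ 2). assert (Hy : 0 < y) by (apply pow_lt; auto).
  assert (Hn : -1 < nu) by lra. assert (Hn1 : -1 < nu + 1) by lra.
  set (PP := fun n => sum_f_R0 (fun k => St nu y k * St nu y (n - k)%nat) n).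
  set (QQ := fun n => sum_f_R0 (fun k => St (nu + 1) y k * St (nu + 1) y (n - k)%nat) n).
  assert (HP : is_series PP (Sb nu y * Sb nu y)).
  { apply is_series_mult_pos; try (apply Series_correct, ex_St; auto).
    all: intros; unfold St; left; apply Rmult_lt_0_compat; [apply ac_pos; auto | apply pow_lt; auto]. }
  assert (HQ : is_series QQ (Sb (nu + 1) y * Sb (nu + 1) y)).
  { apply is_series_mult_pos; try (apply Series_correct, ex_St; auto).
    all: intros; unfold St; left; apply Rmult_lt_0_compat; [apply ac_pos; auto | apply pow_lt; auto]. }
  assert (Hcmp : forall n, 0 <= y * QQ n <= PP (S n)).
  { intros n. unfold PP, QQ, St. rewrite !sum_pow.
    pose proof (coef_ineq nu n Hnu). pose proof (pow_lt y n Hy).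
    assert (0 <= sum_f_R0 (fun k => ac (nu + 1) k * ac (nu + 1) (n - k)) n).
    { apply cond_pos_sum. intros; left; apply Rmult_lt_0_compat; apply ac_pos; auto. }
    simpl (y ^ S n). split. apply Rmult_le_pos; [lra|]. apply Rmult_le_pos; lra.
    rewrite Rmult_assoc. apply Rmult_le_compat_l. lra. apply Rmult_le_compat_l; lra. }
  assert (HexP : ex_series PP) by (eexists; eauto).
  assert (Heq : Sb nu y * Sb nu y = PP 0%nat + Series (fun n => PP (S n))).
  { rewrite <- Series_incr_1 by auto. symmetry. apply is_series_unique; auto. }
  assert (Hle : Series (fun n => y * QQ n) <= Series (fun n => PP (S n))).
  { apply Series_le; auto. apply (proj1 (ex_series_incr_1 PP)); auto. }
  rewrite Series_scal_l in Hle. rewrite (is_series_unique _ _ HQ) in Hle.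
  assert (HP0 : 0 < PP 0%nat).
  { unfold PP, St. simpl. pose proof (ac_pos nu 0 Hn). nra. }
  pose proof (S_pos nu y Hn Hy). pose proof (S_pos (nu + 1) y Hn1 Hy).
  assert (Hsq : (x * Sb (nu + 1) y) * (x * Sb (nu + 1) y) < Sb nu y * Sb nu y).
  { replace ((x * Sb (nu + 1) y) * (x * Sb (nu + 1) y)) with (y * (Sb (nu + 1) y * Sb (nu + 1) y))
      by (unfold y; ring). lra. }
  assert (0 < x * Sb (nu + 1) y) by (apply Rmult_lt_0_compat; auto).
  nra.
Qed.

Lemma Bessel_mono nu z : 0 < nu -> 0 < z -> BesselI (nu + 1) z < BesselI nu z.
Proof.
  intros Hnu Hz. rewrite !Bessel_Sb by lra.
  rewrite Rpower_plus, Rpower_1 by lra.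
  pose proof (Sb_mono nu (z / 2) Hnu ltac:(lra)).
  assert (0 < Rpower (z / 2) nu) by (unfold Rpower; apply exp_pos).
  rewrite Rmult_assoc. apply Rmult_lt_compat_l; auto.
Qed.

Lemma Bessel_pos mu z : -1 < mu -> 0 < z -> 0 < BesselI mu z.
Proof.
  intros. rewrite Bessel_Sb by auto. apply Rmult_lt_0_compat.
  unfold Rpower; apply exp_pos. apply S_pos; auto. apply pow_lt; lra.
Qed.


Theorem mainTheorem12 (alpha z : R) (halpha : -1 < alpha) (hz : 0 < z) :
  Rabs (BesselI alpha z - BesselI (alpha + 1) z)
    < (4 * alpha + 6) * (BesselI (alpha + 1) z / z).
Proof.
  pose proof (Bessel_rec alpha z halpha hz) as R1.
  pose proof (Bessel_rec (alpha + 1) z ltac:(lra) hz) as R2.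
  pose proof (Bessel_mono (alpha + 1) z ltac:(lra) hz) as M1.
  pose proof (Bessel_mono (alpha + 1 + 1) z ltac:(lra) hz) as M2.
  replace (alpha + 1 + 1) with (alpha + 2) in * by ring.
  replace (alpha + 1 + 2) with (alpha + 2 + 1) in R2 by ring.
  set (A := BesselI alpha z) in *. set (B := BesselI (alpha + 1) z) in *.
  set (C := BesselI (alpha + 2) z) in *. set (D := BesselI (alpha + 2 + 1) z) in *.
  assert (HB : 0 < B) by (apply Bessel_pos; lra).
  set (T := B / z).
  assert (E1 : (alpha + 1) / (z / 2) * B = 2 * (alpha + 1) * T) by (unfold T; field; lra).
  assert (E2 : (alpha + 2) / (z / 2) * C <= 2 * (alpha + 2) * T).
  { unfold T. replace (2 * (alpha + 2) * (B / z)) with ((alpha + 2) / (z / 2) * B) by (field; lra).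
    apply Rmult_le_compat_l. apply Rdiv_le_0_compat; lra. lra. }
  assert (HT : 0 < T) by (apply Rdiv_lt_0_compat; lra).
  assert (F1 : 0 < (4 * alpha + 4) * T) by (apply Rmult_lt_0_compat; lra).
  assert (F2 : 0 < (2 * alpha + 4) * T) by (apply Rmult_lt_0_compat; lra).
  rewrite E1 in R1. apply Rabs_def1; nra.
Qed.
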